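(* Let $(X,d)$ be a compact metric space and $f\colon X\to X$ a continuous map. Assume that for some $k\in\mathbb N$ there are closed sets $Z_1,\dots,Z_k\subseteq X$ with $f(Z_i)\subseteq Z_i$ for each $i$, such that (1) $X=Z_1\cup\dots\cup Z_k$; (2) $Z_i\cap Z_j\ne\emptyset$ for all $i,j$; (3) $f|_{Z_i}\colon Z_i\to Z_i$ is strongly mixing for every $i$. Then $f$ is generically $\varepsilon$-chaotic for every $0<\varepsilon<\frac12\min_i\operatorname{diam} Z_i$.
   Context: A pair $(x,y)\in X^2$ is $\varepsilon$-scrambled if $\liminf_n d(f^n(x),f^n(y))=0$ and $\limsup_n d(f^n(x),f^n(y))>\varepsilon$; $f$ is generically $\varepsilon$-chaotic if the set of $\varepsilon$-scrambled pairs is residual in $X^2$. A map $g\colon Y\to Y$ is strongly mixing if for all nonempty open $U,V\subseteq Y$ there is $n_0$ with $g^n(U)\cap V\ne\emptyset$ for all $n\ge n_0$. *)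

(* Defs.v *)
From HB Require Import structures.
From mathcomp Require Import all_boot all_order all_algebra.
From mathcomp Require Import all_classical all_reals all_analysis.
Set Implicit Arguments. Unset Strict Implicit. Unset Printing Implicit Defensive.
Import Order.TTheory GRing.Theory Num.Theory.
Local Open Scope classical_set_scope.
Local Open Scope ring_scope.

Section Defs.
Context {R : realType} {X : metricType R}.

Definition orbit_dist (f : X -> X) (x y : X) : (\bar R)^nat :=
  fun n => (mdist (iter n f x) (iter n f y))%:E.

Definition scrambled (f : X -> X) (eps : R) (x y : X) : Prop :=
  limn_einf (orbit_dist f x y) = 0%E /\ (eps%:E < limn_esup (orbit_dist f x y))%E.

Definition residual {T : topologicalType} (S : set T) : Prop :=
  exists U : (set T)^nat, (forall n, open (U n) /\ dense (U n)) /\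
    \bigcap_n U n `<=` S.

Definition generically_chaotic (f : X -> X) (eps : R) : Prop :=
  residual [set p : X * X | scrambled f eps p.1 p.2].

Definition diam (Z : set X) : R := sup [set mdist x y | x in Z & y in Z].

(** the restriction of f to the invariant set Z is strongly mixing: for all
    nonempty relatively open U = Z ∩ O1, V = Z ∩ O2 of Z, f^n(U) ∩ V ≠ ∅
    for all large n *)
Definition strongly_mixing_on (f : X -> X) (Z : set X) : Prop :=
  forall O1 O2 : set X, open O1 -> open O2 ->
    Z `&` O1 !=set0 -> Z `&` O2 !=set0 ->
    exists n0 : nat, forall n : nat, (n0 <= n)%N ->
      (iter n f @` (Z `&` O1)) `&` (Z `&` O2) !=set0.

End Defs.

(* Main.v *)
Require Import Defs.
From HB Require Import structures.
From mathcomp Require Import all_boot all_order all_algebra.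
From mathcomp Require Import all_classical all_reals all_analysis.
From mathcomp Require Import lra.
Set Implicit Arguments. Unset Strict Implicit.
Import Order.TTheory GRing.Theory Num.Theory.
Local Open Scope classical_set_scope.
Local Open Scope ring_scope.

Section Helpers.
Context {R : realType} {X : metricType R}.
Implicit Types (f : X -> X).

Lemma iter_cont f n : continuous f -> continuous (iter n f).
Proof.
move=> cf; elim: n => [|n IH] x; first exact: cvg_id.
exact: (@continuous_comp _ _ _ (iter n f) f x (IH x) (cf _)).
Qed.

Lemma mdist_tri (x y z : X) : mdist x z <= mdist x y + mdist y z.
Proof. exact: metric_triangle. Qed.

Lemma mdist_sym (x y : X) : mdist x y = mdist y x.
Proof. exact: metric_sym. Qed.

Lemma open_lt (g : X -> X) r : continuous g ->
  open [set p : X * X | mdist (g p.1) (g p.2) < r].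
Proof.
move=> cg; rewrite openE => p /= hp.
set s := r - mdist (g p.1) (g p.2).
have s0 : 0 < s / 2 by rewrite divr_gt0 // subr_gt0.
exists (g @^-1` ball (g p.1) (s/2), g @^-1` ball (g p.2) (s/2)).
  by split; apply: cg; apply: nbhsx_ballx.
move=> [a b] /= [ha hb]; rewrite /= !ballEmdist /= in ha hb.
have t1 := mdist_tri (g a) (g p.1) (g b).
have t2 := mdist_tri (g p.1) (g p.2) (g b).
have e1 := mdist_sym (g a) (g p.1).
rewrite /s in ha hb; lra.
Qed.

Lemma open_gt (g : X -> X) r : continuous g ->
  open [set p : X * X | r < mdist (g p.1) (g p.2)].
Proof.
move=> cg; rewrite openE => p /= hp.
set s := mdist (g p.1) (g p.2) - r.
have s0 : 0 < s / 2 by rewrite divr_gt0 // subr_gt0.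
exists (g @^-1` ball (g p.1) (s/2), g @^-1` ball (g p.2) (s/2)).
  by split; apply: cg; apply: nbhsx_ballx.
move=> [a b] /= [ha hb]; rewrite /= !ballEmdist /= in ha hb.
have t1 := mdist_tri (g p.1) (g a) (g p.2).
have t2 := mdist_tri (g a) (g b) (g p.2).
have e1 := mdist_sym (g b) (g p.2).
rewrite /s in ha hb; lra.
Qed.


Lemma mix1 f (Z A : set X) x0 c eta : strongly_mixing_on f Z -> open A ->
  Z x0 -> A x0 -> Z c -> 0 < eta ->
  exists n0, forall n, (n0 <= n)%N -> exists2 x, A x & mdist c (iter n f x) < eta.
Proof.
move=> H oA Zx Ax Zc e0.
have [||n0 Hn] := H A (ball c eta)° oA (@open_interior _ _).
- by exists x0.
- by exists c; split => //; exact: nbhsx_ballx.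
exists n0 => n /Hn [z [[x [Zx' Ax'] <-] [_ /interior_subset]]].
by rewrite ballEmdist /= => h; exists x.
Qed.

Lemma exists_between (D : nat -> R) (eps : R) k :
  (forall i, (i < k)%N -> eps < D i) ->
  exists2 e, eps < e & forall i, (i < k)%N -> e < D i.
Proof.
elim: k => [|k IH] H.
  by exists (eps + 1) => //; rewrite ltrDl.
have [e he1 he2] : exists2 e, eps < e & forall i, (i < k)%N -> e < D i.
  by apply: IH => i ik; apply: H; rewrite ltnS ltnW.
have hk : eps < D k by apply: H.
exists (Num.min e ((eps + D k)/2)).
  by rewrite lt_min he1 /=; lra.
move=> i; rewrite ltnS leq_eqVlt => /orP[/eqP ->|ik].
  by rewrite gt_min; apply/orP; right; lra.
by rewrite gt_min (he2 _ ik).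
Qed.

Lemma diam_pts (Z : set X) e : Z !=set0 -> e < diam Z / 2 ->
  exists a, exists2 b, Z a /\ Z b & 2 * e < mdist a b.
Proof.
move=> [z Zz] he.
have S0 : [set mdist x y | x in Z & y in Z] !=set0.
  by exists (mdist z z); exists z => //; exists z.
have hs : 2 * e < sup [set mdist x y | x in Z & y in Z].
  by move: he; rewrite /diam; move: (sup _) => s0 he0; lra.
have [v [a Za [b Zb <-]] hv] := sup_gt S0 hs.
by exists a, b.
Qed.

Local Open Scope ereal_scope.

Lemma liminf0 (u : nat -> R) : (forall n, (0 <= u n)%R) ->
  (forall n, exists2 m, (n <= m)%N & (u m < n.+1%:R^-1)%R) ->
  limn_einf (fun n => (u n)%:E) = 0.
Proof.
move=> u0 H.
have -> : limn_einf (fun n => (u n)%:E) = ereal_sup (range (einfs (fun n => (u n)%:E))).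
  by rewrite limn_einf_lim; apply/cvg_lim => //; exact: cvg_einfs_sup.
apply/eqP; rewrite eq_le; apply/andP; split.
- apply/ereal_supP => _ [n _ <-].
  have HN : forall N, (n <= N)%N -> einfs (fun n => (u n)%:E) n <= (N.+1%:R^-1)%:E.
    move=> N nN; apply: le_trans (nondecreasing_einfs _ nN) _.
    have [m Nm um] := H N.
    apply: le_trans (ereal_inf_lbound _) _; first by exists m.
    by rewrite lee_fin ltW.
  move: (einfs _ n) HN => w HN.
  have := HN n (leqnn n).
  case: w HN => [r| |] HN // _.
  rewrite lee_fin leNgt; apply/negP => r0.
  pose N := maxn n (Num.trunc r^-1).
  have := HN N (leq_maxl _ _); rewrite lee_fin => hr.
  have hy := truncnS_gt r^-1.
  have hM : ((Num.trunc r^-1).+1%:R <= N.+1%:R :> R)%R by rewrite ler_nat ltnS leq_maxr.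
  have M0 : (0 < N.+1%:R :> R)%R by rewrite ltr0n.
  have e1 : (r * r^-1 = 1)%R by rewrite mulfV // gt_eqF.
  have e2 : ((N.+1%:R)^-1 * N.+1%:R = 1 :> R)%R by rewrite mulVf // gt_eqF.
  move: hr hy hM M0 e1 e2.
  move: (N.+1%:R : R)%R ((Num.trunc r^-1).+1%:R : R)%R (r^-1)%R ((N.+1%:R)^-1 : R)%R => M T y iM.
  move=> *; nra.
- apply: le_trans (ereal_sup_ubound _); last by exists 0%N.
  by apply: le_ereal_inf_tmp => _ [m _ <-]; rewrite lee_fin.
Qed.

Lemma limsup_ge (u : nat -> R) (e : R) :
  (forall n, exists2 m, (n <= m)%N & (e < u m)%R) ->
  e%:E <= limn_esup (fun n => (u n)%:E).
Proof.
move=> H.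
have -> : limn_esup (fun n => (u n)%:E) = ereal_inf (range (esups (fun n => (u n)%:E))).
  by rewrite limn_esup_lim; apply/cvg_lim => //; exact: cvg_esups_inf.
apply: le_ereal_inf_tmp => _ [n _ <-].
have [m nm um] := H n.
apply: le_trans (ereal_sup_ubound _); last by exists m.
by rewrite lee_fin ltW.
Qed.

End Helpers.

Unset Implicit Arguments. Set Strict Implicit.
Theorem lemma33 (R : realType) (X : metricType R) (f : X -> X)
  (k : nat) (Z : nat -> set X) :
  compact [set: X] ->
  continuous f ->
  (0 < k)%N ->
  (forall i, (i < k)%N -> closed (Z i)) ->
  (forall i, (i < k)%N -> f @` Z i `<=` Z i) ->
  [set: X] = \bigcup_(i in [set i | (i < k)%N]) Z i ->
  (forall i j, (i < k)%N -> (j < k)%N -> Z i `&` Z j !=set0) ->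
  (forall i, (i < k)%N -> strongly_mixing_on f (Z i)) ->
  forall eps : R, 0 < eps ->
    (forall i, (i < k)%N -> eps < diam (Z i) / 2) ->
    generically_chaotic f eps.
Proof.
move=> _ cf k0 _ _ cover inter mix eps e0 hdiam.
have [e1 he1 he1D] := exists_between (D := fun i => diam (Z i) / 2) hdiam.
pose d := fun n (p : X * X) => mdist (iter n f p.1) (iter n f p.2).
pose A n := [set p : X * X | exists2 m, (n <= m)%N & d m p < n.+1%:R^-1].
pose B n := [set p : X * X | exists2 m, (n <= m)%N & e1 < d m p].
have oA n : open (A n).
  rewrite openE => p [m nm hm].
  have := open_lt (r := n.+1%:R^-1) (iter_cont (n := m) cf); rewrite openE => /(_ p hm).
  by apply: filterS => q hq; exists m.
have oB n : open (B n).
  rewrite openE => p [m nm hm].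
  have := open_gt (r := e1) (iter_cont (n := m) cf); rewrite openE => /(_ p hm).
  by apply: filterS => q hq; exists m.
have key : forall O : set (X * X), O !=set0 -> open O -> exists i j (P Q : set X),
    [/\ (i < k)%N, (j < k)%N, open P & open Q] /\
    [/\ (Z i `&` P) !=set0, (Z j `&` Q) !=set0 & forall a b, P a -> Q b -> O (a, b)].
  move=> O [p Op] oO.
  have := oO; rewrite openE => /(_ p Op) [[P Q] [/= nP nQ] sub].
  have : [set: X] p.1 by [].
  rewrite cover => -[i ik Zi].
  have : [set: X] p.2 by [].
  rewrite cover => -[j jk Zj].
  exists i, j, P°, Q°; split; first by split => //; exact: open_interior.
  split; [by exists p.1 | by exists p.2 |].
  by move=> a b Pa Qb; apply: sub; split; apply: interior_subset.
have dA n : dense (A n).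
  move=> O O0 oO.
  have [i [j [P [Q [[ik jk oP oQ] [[x0 [Zx Px]] [y0 [Zy Qy]] sub]]]]]] := key O O0 oO.
  have [z [Ziz Zjz]] := inter i j ik jk.
  have d0 : 0 < n.+1%:R^-1 / 2 :> R by rewrite divr_gt0 // invr_gt0 ltr0n.
  have [n1 H1] := mix1 (mix i ik) oP Zx Px Ziz d0.
  have [n2 H2] := mix1 (mix j jk) oQ Zy Qy Zjz d0.
  pose m := maxn n (maxn n1 n2).
  have [x Px' hx] := H1 m (leq_trans (leq_maxl _ _) (leq_maxr _ _)).
  have [y Qy' hy] := H2 m (leq_trans (leq_maxr _ _) (leq_maxr _ _)).
  exists (x, y); split; first exact: sub.
  exists m; first exact: leq_maxl.
  rewrite /d /=.
  have t := mdist_tri (iter m f x) z (iter m f y).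
  have s := mdist_sym (iter m f x) z.
  move: (n.+1%:R^-1 : R) hx hy t s d0 => r hx hy t s d0.
  lra.
have dB n : dense (B n).
  move=> O O0 oO.
  have [i [j [P [Q [[ik jk oP oQ] [[x0 [Zx Px]] [y0 [Zy Qy]] sub]]]]]] := key O O0 oO.
  have [z [Ziz Zjz]] := inter i j ik jk.
  have Zne : Z i !=set0 by have [w [Zw _]] := inter i i ik ik; exists w.
  have [a [b [Za Zb] hab]] := diam_pts Zne (he1D i ik).
  have [c [Zc hc]] : exists c, Z i c /\ e1 < mdist c z.
    have t := mdist_tri a z b.
    have s := mdist_sym z b.
    case: (ltrP e1 (mdist a z)) => h; first by exists a.
    by exists b; split => //; lra.
  have d0 : 0 < (mdist c z - e1) / 2 by rewrite divr_gt0 // subr_gt0.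
  have [n1 H1] := mix1 (mix i ik) oP Zx Px Zc d0.
  have [n2 H2] := mix1 (mix j jk) oQ Zy Qy Zjz d0.
  pose m := maxn n (maxn n1 n2).
  have [x Px' hx] := H1 m (leq_trans (leq_maxl _ _) (leq_maxr _ _)).
  have [y Qy' hy] := H2 m (leq_trans (leq_maxr _ _) (leq_maxr _ _)).
  exists (x, y); split; first exact: sub.
  exists m; first exact: leq_maxl.
  rewrite /d /=.
  have t1 := mdist_tri c (iter m f x) z.
  have t2 := mdist_tri (iter m f x) (iter m f y) z.
  have s := mdist_sym z (iter m f y).
  lra.
exists (fun n => A n `&` B n); split.
  by move=> n; split; [exact: openI | exact: denseI].
move=> [x y] H /=.
have Hn n : (A n `&` B n) (x, y) by apply: H.
split.
  apply: (liminf0 (u := (fun n => mdist (iter n f x) (iter n f y)))).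
    by move=> n; exact: mdist_ge0.
  by move=> n; have [[m nm hm] _] := Hn n; exists m.
apply: (@lt_le_trans _ _ e1%:E); first by rewrite lte_fin.
apply: (limsup_ge (u := fun n => mdist (iter n f x) (iter n f y))).
by move=> n; have [_ [m nm hm]] := Hn n; exists m.
Qed.
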